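(* Let $\pi$ be a Noohi group, $H\subseteq\pi$ a subgroup, and $\pi':=(\pi/\langle H\rangle)^{\mathrm{Noohi}}$ the Noohi quotient with canonical map $\pi\to\pi'$. Let $G$ be a Hausdorff topological group and $\lambda':\pi'\to G$ a continuous homomorphism, and put $\lambda:=\lambda'\circ(\pi\to\pi')$. Then $\lambda$ is discrete if and only if $\lambda'$ is discrete.
   Context: A continuous homomorphism of topological groups is discrete if it factors through a discrete group (equivalently its kernel is open). A Noohi group is a topological group $\pi$ with $\pi\to\operatorname{Aut}(F_\pi)$ a topological isomorphism ($F_\pi$ forgetful functor on discrete $\pi$-sets, compact-open topology). $\langle H\rangle$ is the smallest normal subgroup containing $H$, and $(-)^{\mathrm{Noohi}}$ is the left adjoint of the inclusion of Noohi groups into topological groups. *)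

(* Defs.v *)
From Stdlib Require Import List.
Set Implicit Arguments.

Record TopGroup := {
  tg_car :> Type;
  tg_mul : tg_car -> tg_car -> tg_car;
  tg_inv : tg_car -> tg_car;
  tg_one : tg_car;
  tg_mulA : forall x y z, tg_mul x (tg_mul y z) = tg_mul (tg_mul x y) z;
  tg_mul1g : forall x, tg_mul tg_one x = x;
  tg_mulg1 : forall x, tg_mul x tg_one = x;
  tg_mulVg : forall x, tg_mul (tg_inv x) x = tg_one;
  tg_mulgV : forall x, tg_mul x (tg_inv x) = tg_one;
  tg_open : (tg_car -> Prop) -> Prop;
  tg_open_setT : tg_open (fun _ => True);
  tg_open_inter : forall U V, tg_open U -> tg_open V ->
      tg_open (fun x => U x /\ V x);
  tg_open_union : forall S : (tg_car -> Prop) -> Prop,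
      (forall U, S U -> tg_open U) -> tg_open (fun x => exists U, S U /\ U x);
  tg_mul_cont : forall W, tg_open W -> forall x y, W (tg_mul x y) ->
      exists A B, tg_open A /\ tg_open B /\ A x /\ B y /\
        (forall a b, A a -> B b -> W (tg_mul a b));
  tg_inv_cont : forall W, tg_open W -> tg_open (fun x => W (tg_inv x))
}.

Arguments tg_mul {t}. Arguments tg_inv {t}. Arguments tg_one {t}.
Arguments tg_open {t}.

Definition hausdorff (G : TopGroup) : Prop :=
  forall x y : G, x <> y -> exists U V, tg_open U /\ tg_open V /\ U x /\ V y /\
    (forall z, U z -> V z -> False).

Definition continuous_map {A B : TopGroup} (f : A -> B) : Prop :=
  forall V, tg_open V -> tg_open (fun x => V (f x)).

Definition group_hom {A B : TopGroup} (f : A -> B) : Prop :=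
  forall x y, f (tg_mul x y) = tg_mul (f x) (f y).

Definition cont_hom {A B : TopGroup} (f : A -> B) : Prop :=
  group_hom f /\ continuous_map f.

(* A continuous homomorphism is discrete if it factors through a discrete
   group, equivalently its kernel is open. *)
Definition discrete_hom {A B : TopGroup} (f : A -> B) : Prop :=
  tg_open (fun x => f x = tg_one).

Definition subgroup {G : TopGroup} (H : G -> Prop) : Prop :=
  H tg_one /\ (forall x y, H x -> H y -> H (tg_mul x y)) /\
  (forall x, H x -> H (tg_inv x)).

Definition normal_subgroup {G : TopGroup} (N : G -> Prop) : Prop :=
  subgroup N /\ forall g x, N x -> N (tg_mul (tg_mul g x) (tg_inv g)).

Definition normal_closure {G : TopGroup} (H : G -> Prop) : G -> Prop :=
  fun x => forall N, normal_subgroup N -> (forall h, H h -> N h) -> N x.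

Definition is_quotient {G Q : TopGroup} (N : G -> Prop) (p : G -> Q) : Prop :=
  group_hom p /\ (forall q : Q, exists g, p g = q) /\
  (forall g, p g = tg_one <-> N g) /\
  (forall V : Q -> Prop, tg_open V <-> tg_open (fun g => V (p g))).

(* Discrete pi-sets: sets with an action of pi which is continuous for the
   discrete topology on the set, i.e. the preimage of each point
   is open in pi x X. *)
Record dpiset (P : TopGroup) := {
  ps_car :> Type;
  ps_act : P -> ps_car -> ps_car;
  ps_act1 : forall x, ps_act tg_one x = x;
  ps_actM : forall g h x, ps_act (tg_mul g h) x = ps_act g (ps_act h x);
  ps_act_cont : forall x y, tg_open (fun g => ps_act g x = y)
}.

Arguments ps_act {P} d.

Definition equivariant {P : TopGroup} {X Y : dpiset P} (f : X -> Y) : Prop :=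
  forall g x, f (ps_act X g x) = ps_act Y g (f x).

(* Aut(F_P): automorphisms of the forgetful functor on discrete P-sets. *)
Record AutF (P : TopGroup) := {
  af_comp : forall X : dpiset P, X -> X;
  af_nat : forall (X Y : dpiset P) (f : X -> Y), equivariant f ->
      forall x, f (af_comp X x) = af_comp Y (f x);
  af_bij : forall X : dpiset P, exists inv : X -> X,
      (forall x, inv (af_comp X x) = x) /\ (forall x, af_comp X (inv x) = x)
}.

Arguments af_comp {P} a X x.

(* compact-open topology on Aut(F_P): generated by the subbasic opens
   { phi | phi_X x = y } (compact subsets of a discrete set are finite). *)
Definition subbasic_pt (P : TopGroup) := {X : dpiset P & (X * X)%type}.

Definition sat_all {P : TopGroup} (l : list (subbasic_pt P)) (phi : AutF P)
  : Prop :=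
  forall t, In t l -> af_comp phi (projT1 t) (fst (projT2 t)) = snd (projT2 t).

Definition AutF_open {P : TopGroup} (W : AutF P -> Prop) : Prop :=
  forall phi, W phi -> exists l : list (subbasic_pt P),
    sat_all l phi /\ forall psi, sat_all l psi -> W psi.

Section Rho.
Context {P : TopGroup}.
Variable g : tg_car P.

Lemma rho_nat (X Y : dpiset P) (f : X -> Y) : equivariant f ->
  forall x, f (ps_act X g x) = ps_act Y g (f x).
Proof. intros Hf x; apply Hf. Qed.

Lemma rho_bij (X : dpiset P) : exists inv : X -> X,
  (forall x, inv (ps_act X g x) = x) /\ (forall x, ps_act X g (inv x) = x).
Proof.
  exists (ps_act X (tg_inv g)); split; intro x.
  - rewrite <- ps_actM, tg_mulVg; apply ps_act1.
  - rewrite <- ps_actM, tg_mulgV; apply ps_act1.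
Qed.

Definition rho : AutF P :=
  {| af_comp := fun X => ps_act X g; af_nat := rho_nat; af_bij := rho_bij |}.
End Rho.

(* P is Noohi: P -> Aut(F_P) is an isomorphism of topological groups
   (it is always a group homomorphism). *)
Definition Noohi (P : TopGroup) : Prop :=
  (forall g h : P, (forall (X : dpiset P) x, ps_act X g x = ps_act X h x) ->
     g = h) /\
  (forall phi : AutF P, exists g : P,
     forall (X : dpiset P) x, af_comp phi X x = ps_act X g x) /\
  (forall W : AutF P -> Prop, AutF_open W -> tg_open (fun g : P => W (rho g))) /\
  (forall U : P -> Prop, tg_open U ->
     AutF_open (fun phi => exists g, U g /\
        forall (X : dpiset P) x, af_comp phi X x = ps_act X g x)).

(* eta : Q -> Q' is the unit of the Noohi-completion adjunction at Q,
   i.e. a universal arrow from Q to the inclusion of Noohi groups into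
   topological groups. *)
Definition noohi_completion {Q Q' : TopGroup} (eta : Q -> Q') : Prop :=
  Noohi Q' /\ cont_hom eta /\
  forall (R : TopGroup) (f : Q -> R), Noohi R -> cont_hom f ->
    (exists g : Q' -> R, cont_hom g /\ forall x, g (eta x) = f x) /\
    (forall g1 g2 : Q' -> R, cont_hom g1 -> cont_hom g2 ->
       (forall x, g1 (eta x) = f x) -> (forall x, g2 (eta x) = f x) ->
       forall y, g1 y = g2 y).

(* Main.v *)
Require Import Defs.
From Stdlib Require Import List FunctionalExtensionality PropExtensionality ProofIrrelevance ClassicalEpsilon Classical.
Import ListNotations.
Set Implicit Arguments.

Lemma open_ext (G : TopGroup) (U V : G -> Prop) :
  (forall x, U x <-> V x) -> tg_open U -> tg_open V.
Proof.
  intros H HU. assert (U = V) as <-; [|exact HU].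
  extensionality x. apply propositional_extensionality; apply H.
Qed.

Lemma open_empty (G : TopGroup) : tg_open (fun _ : G => False).
Proof.
  eapply open_ext; [| apply (tg_open_union G (fun _ => False)); tauto].
  intros x; split; [intros [U [[] _]] | tauto].
Qed.

Lemma locally_open (G : TopGroup) (U : G -> Prop) :
  (forall x, U x -> exists N, tg_open N /\ N x /\ forall y, N y -> U y) -> tg_open U.
Proof.
  intros H.
  apply open_ext with (U := fun x => exists N, (tg_open N /\ forall y, N y -> U y) /\ N x).
  - intros x; split.
    + intros [N [[_ HN] Nx]]; auto.
    + intros Ux; destruct (H x Ux) as [N [? [? ?]]]; eauto.
  - apply tg_open_union. intros N [? _]; auto.
Qed.

Lemma mul_cancel_l (G:TopGroup) (a x y : G) : tg_mul a x = tg_mul a y -> x = y.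
Proof.
  intros H. rewrite <- (tg_mul1g G x), <- (tg_mul1g G y), <- (tg_mulVg G a), <- !tg_mulA, H.
  reflexivity.
Qed.

Lemma hom_one (A B : TopGroup) (f : A -> B) : group_hom f -> f tg_one = tg_one.
Proof.
  intros Hf. apply (@mul_cancel_l _ (f tg_one)). rewrite <- Hf, tg_mul1g, tg_mulg1. reflexivity.
Qed.

Lemma open_translate (G:TopGroup) (U : G -> Prop) (a : G) :
  tg_open U -> tg_open (fun q => U (tg_mul a q)).
Proof.
  intros HU. apply locally_open. intros q0 Hq0.
  destruct (tg_mul_cont G U HU a q0 Hq0) as [A [B [HA [HB [Aa [Bq HAB]]]]]].
  exists B. split; [exact HB | split; [exact Bq|]]. intros y By. apply HAB; auto.
Qed.

Record Sym (T : Type) := { sf : T -> T; sg : T -> T;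
  sfg : forall x, sf (sg x) = x; sgf : forall x, sg (sf x) = x }.
Arguments sf {T} s x. Arguments sg {T} s x.

Lemma sym_eq T (a b : Sym T) : (forall x, sf a x = sf b x) -> a = b.
Proof.
  destruct a as [fa ga fga gfa], b as [fb gb fgb gfb]; simpl; intros H.
  assert (fa = fb) by (extensionality x; auto). subst fb.
  assert (ga = gb).
  { extensionality x. rewrite <- (gfb (ga x)) at 1. rewrite fga. reflexivity. }
  subst gb. rewrite (proof_irrelevance _ fga fgb), (proof_irrelevance _ gfa gfb).
  reflexivity.
Qed.

Section SymG.
Variable T : Type.

Definition sone : Sym T := {| sf := fun x => x; sg := fun x => x;
  sfg := fun x => eq_refl; sgf := fun x => eq_refl |}.

Lemma smul_fg (a b : Sym T) x : sf a (sf b (sg b (sg a x))) = x.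
Proof. rewrite sfg, sfg; reflexivity. Qed.
Lemma smul_gf (a b : Sym T) x : sg b (sg a (sf a (sf b x))) = x.
Proof. rewrite sgf, sgf; reflexivity. Qed.

Definition smul (a b : Sym T) : Sym T := {| sf := fun x => sf a (sf b x);
  sg := fun x => sg b (sg a x); sfg := smul_fg a b; sgf := smul_gf a b |}.

Definition sinv (a : Sym T) : Sym T := {| sf := sg a; sg := sf a;
  sfg := sgf a; sgf := sfg a |}.

Definition sym_open (U : Sym T -> Prop) : Prop :=
  forall s, U s -> exists l : list T,
    forall t, (forall x, In x l -> sf t x = sf s x) -> U t.

Lemma sym_open_T : sym_open (fun _ => True).
Proof. intros s _; exists nil; auto. Qed.

Lemma sym_open_inter U V : sym_open U -> sym_open V -> sym_open (fun x => U x /\ V x).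
Proof.
  intros HU HV s [Us Vs].
  destruct (HU s Us) as [l1 H1], (HV s Vs) as [l2 H2].
  exists (l1 ++ l2); intros t Ht; split; [apply H1 | apply H2];
    intros x Hx; apply Ht; apply in_or_app; auto.
Qed.

Lemma sym_open_union (S : (Sym T -> Prop) -> Prop) :
  (forall U, S U -> sym_open U) -> sym_open (fun x => exists U, S U /\ U x).
Proof.
  intros HS s [U [HSU HUs]]. destruct (HS U HSU s HUs) as [l Hl].
  exists l; intros t Ht; exists U; auto.
Qed.

Lemma sym_mul_cont W : sym_open W -> forall x y, W (smul x y) ->
  exists A B, sym_open A /\ sym_open B /\ A x /\ B y /\
    (forall a b, A a -> B b -> W (smul a b)).
Proof.
  intros HW x y Hxy. destruct (HW _ Hxy) as [l Hl].
  exists (fun a => forall z, In z l -> sf a (sf y z) = sf x (sf y z)),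
         (fun b => forall z, In z l -> sf b z = sf y z).
  split; [|split; [|split; [|split]]].
  - intros s Hs. exists (map (sf y) l). intros t Ht z Hz.
    rewrite Ht by (apply in_map; auto). apply Hs; auto.
  - intros s Hs. exists l. intros t Ht z Hz. rewrite Ht by auto. apply Hs; auto.
  - auto.
  - auto.
  - intros a b Ha Hb. apply Hl. intros z Hz. simpl. rewrite Hb by auto. apply Ha; auto.
Qed.

Lemma sym_inv_cont W : sym_open W -> sym_open (fun x => W (sinv x)).
Proof.
  intros HW s Hs. destruct (HW _ Hs) as [l Hl].
  exists (map (sg s) l). intros t Ht. apply Hl. intros z Hz. simpl.
  assert (E : sf t (sg s z) = z) by (rewrite Ht by (apply in_map; auto); apply sfg).
  rewrite <- E at 1. rewrite sgf. reflexivity.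
Qed.

Lemma smulA x y z : smul x (smul y z) = smul (smul x y) z.
Proof. apply sym_eq; reflexivity. Qed.
Lemma smul1 x : smul sone x = x. Proof. apply sym_eq; reflexivity. Qed.
Lemma smulg1 x : smul x sone = x. Proof. apply sym_eq; reflexivity. Qed.
Lemma smulV x : smul (sinv x) x = sone. Proof. apply sym_eq; intro; apply sgf. Qed.
Lemma smulgV x : smul x (sinv x) = sone. Proof. apply sym_eq; intro; apply sfg. Qed.

Definition SymG : TopGroup := {|
  tg_car := Sym T; tg_mul := smul; tg_inv := sinv; tg_one := sone;
  tg_mulA := smulA; tg_mul1g := smul1; tg_mulg1 := smulg1;
  tg_mulVg := smulV; tg_mulgV := smulgV;
  tg_open := sym_open;
  tg_open_setT := sym_open_T;
  tg_open_inter := sym_open_inter;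
  tg_open_union := sym_open_union;
  tg_mul_cont := sym_mul_cont;
  tg_inv_cont := sym_inv_cont |}.

End SymG.

Section SymNoohi.
Variable T : Type.

Lemma Tset_cont (x y : T) : @tg_open (SymG T) (fun g => sf g x = y).
Proof. intros s Hs. exists [x]. intros t Ht. rewrite Ht by (simpl; auto). exact Hs. Qed.

Definition Tset : dpiset (SymG T) := {| ps_car := T; ps_act := fun (s : SymG T) (x : T) => sf (s : Sym T) x;
  ps_act1 := fun x => eq_refl; ps_actM := fun g h x => eq_refl; ps_act_cont := Tset_cont |}.

Lemma Oset_cont (x y : option T) : @tg_open (SymG T) (fun g => option_map (sf g) x = y).
Proof.
  intros s Hs. exists (match x with Some a => [a] | None => nil end).
  intros t Ht. rewrite <- Hs. destruct x as [a|]; simpl; auto.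
  rewrite Ht by (simpl; auto). reflexivity.
Qed.

Lemma option_map_id (o : option T) : option_map (fun x => x) o = o.
Proof. destruct o; reflexivity. Qed.
Lemma option_map_comp (f g : T -> T) (o : option T) :
  option_map (fun x => f (g x)) o = option_map f (option_map g o).
Proof. destruct o; reflexivity. Qed.

Definition Oset : dpiset (SymG T) := {| ps_car := option T;
  ps_act := fun (s : SymG T) (o : option T) => option_map (sf (s : Sym T)) o;
  ps_act1 := option_map_id; ps_actM := fun g h => option_map_comp (sf g) (sf h);
  ps_act_cont := Oset_cont |}.

Section L.
Variable l : list T.
Definition Lcar := {m : list T | exists t : Sym T, m = map (sf t) l}.

Lemma Lact_pf (s : Sym T) (m : list T) : (exists t : Sym T, m = map (sf t) l) ->
  exists t : Sym T, map (sf s) m = map (sf t) l.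
Proof. intros [t ->]. exists (smul s t). rewrite map_map. reflexivity. Qed.

Definition Lact (s : Sym T) (m : Lcar) : Lcar :=
  exist _ (map (sf s) (proj1_sig m)) (Lact_pf s (proj2_sig m)).

Lemma Lcar_eq (a b : Lcar) : proj1_sig a = proj1_sig b -> a = b.
Proof. destruct a, b; simpl; intros ->; f_equal; apply proof_irrelevance. Qed.

Lemma Lact1 m : Lact (sone T) m = m.
Proof. apply Lcar_eq; simpl; apply map_id. Qed.
Lemma LactM g h m : Lact (smul g h) m = Lact g (Lact h m).
Proof. apply Lcar_eq; simpl; symmetry; apply map_map. Qed.
Lemma Lact_cont x y : @tg_open (SymG T) (fun g => Lact g x = y).
Proof.
  intros s Hs. exists (proj1_sig x). intros t Ht. rewrite <- Hs. apply Lcar_eq; simpl.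
  apply map_ext_in. auto.
Qed.

Definition Lset : dpiset (SymG T) := {| ps_car := Lcar; ps_act := (Lact : SymG T -> Lcar -> Lcar);
  ps_act1 := Lact1; ps_actM := LactM; ps_act_cont := Lact_cont |}.
End L.

Lemma map_eq_in (f g : T -> T) (l : list T) : map f l = map g l -> forall z, In z l -> f z = g z.
Proof.
  induction l as [|a l IH]; simpl; [tauto|]. intros H z [<-|Hz]; injection H; auto.
Qed.

Lemma sym_surj (phi : AutF (SymG T)) : exists g : Sym T,
  forall (X : dpiset (SymG T)) x, af_comp phi X x = ps_act X g x.
Proof.
  destruct (constructive_indefinite_description _ (af_bij phi Tset)) as [inv [H1 H2]].
  exists {| sf := af_comp phi Tset; sg := inv; sfg := H2; sgf := H1 |}.
  set (sig0 := {| sf := af_comp phi Tset; sg := inv; sfg := H2; sgf := H1 |}).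
  intros X x.
  destruct (ps_act_cont X x x (sone T) (ps_act1 X x)) as [l Hl].
  set (Lf := fun m : Lcar l => ps_act X (proj1_sig (constructive_indefinite_description _ (proj2_sig m))) x).
  assert (Lf_spec : forall m (t : Sym T), proj1_sig m = map (sf t) l -> Lf m = ps_act X t x).
  { intros m t Hm. unfold Lf.
    destruct (constructive_indefinite_description _ (proj2_sig m)) as [t' Ht']. simpl.
    assert (Hr : ps_act X (smul (sinv t') t) x = x).
    { apply Hl. intros z Hz. simpl. rewrite Hm in Ht'.
      rewrite (map_eq_in _ _ _ Ht' z Hz). apply sgf. }
    assert (Et : t = smul t' (smul (sinv t') t)) by (apply sym_eq; intro z; simpl; rewrite sfg; reflexivity).
    rewrite Et at 1. change (smul t' (smul (sinv t') t)) with (@tg_mul (SymG T) t' (smul (sinv t') t)).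
    rewrite ps_actM, Hr. reflexivity. }
  assert (Lf_eq : @equivariant _ (Lset l) X Lf).
  { intros s m. destruct (proj2_sig m) as [t Ht].
    rewrite (Lf_spec m t Ht). rewrite (Lf_spec _ (smul s t)).
    - change (smul s t) with (@tg_mul (SymG T) s t). apply ps_actM.
    - simpl. rewrite Ht, map_map. reflexivity. }
  set (z0 := exist (fun m => exists t : Sym T, m = map (sf t) l) l
               (ex_intro _ (sone T) (eq_sym (map_id l))) : Lcar l).
  assert (Hz0 : Lf z0 = x) by (rewrite (Lf_spec z0 (sone T)); [apply ps_act1 | simpl; symmetry; apply map_id]).
  assert (HO : forall o : option T, af_comp phi Oset o = option_map (sf sig0) o).
  { intros [a|].
    - assert (Hs : @equivariant _ Tset Oset (@Some T)) by (intros g y; reflexivity).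
      rewrite <- (af_nat phi Hs). reflexivity.
    - assert (Hc : @equivariant _ Oset Oset (fun _ => None)) by (intros g y; reflexivity).
      pose proof (af_nat phi Hc None) as E. simpl in E. rewrite <- E. reflexivity. }
  assert (HL : proj1_sig (af_comp phi (Lset l) z0) = map (sf sig0) l).
  { apply nth_error_ext. intro n.
    assert (Hp : @equivariant _ (Lset l) Oset (fun m => nth_error (proj1_sig m) n)).
    { intros g m. simpl. apply nth_error_map. }
    pose proof (af_nat phi Hp z0) as E. simpl in E. rewrite E, HO.
    rewrite nth_error_map. reflexivity. }
  rewrite <- Hz0 at 1. rewrite <- (af_nat phi Lf_eq). rewrite (Lf_spec _ sig0 HL). reflexivity.
Qed.

Lemma sym_agree_list (A : Type) (L : list A) (P : A -> Sym T -> Prop) (s : Sym T) :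
  (forall a, In a L -> sym_open (P a) /\ P a s) ->
  exists l : list T, forall t, (forall x, In x l -> sf t x = sf s x) -> forall a, In a L -> P a t.
Proof.
  induction L as [|a L IH]; intros H.
  - exists nil. simpl; tauto.
  - destruct (H a (or_introl eq_refl)) as [Ho Hs]. destruct (Ho s Hs) as [l1 H1].
    destruct IH as [l2 H2]. { intros b Hb; apply H; simpl; auto. }
    exists (l1 ++ l2). intros t Ht b [<-|Hb].
    + apply H1. intros; apply Ht, in_or_app; auto.
    + apply H2; auto. intros; apply Ht, in_or_app; auto.
Qed.

Lemma Noohi_Sym : Noohi (SymG T).
Proof.
  split; [|split; [|split]].
  - intros g h H. apply sym_eq. intro x. exact (H Tset x).
  - exact sym_surj.
  - intros W HW s Hs. destruct (HW _ Hs) as [L [HsatL HL]].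
    destruct (@sym_agree_list _ L (fun u t => ps_act (projT1 u) t (fst (projT2 u)) = snd (projT2 u)) s)
      as [l Hl].
    { intros u Hu. split; [exact (ps_act_cont (projT1 u) (fst (projT2 u)) (snd (projT2 u))) | exact (HsatL u Hu)]. }
    exists l. intros t Ht. apply HL. intros u Hu. exact (Hl t Ht u Hu).
  - intros U HU phi [g [Ug Hg]]. destruct (HU g Ug) as [l Hl].
    exists (map (fun z => existT (fun X : dpiset (SymG T) => (X * X)%type) Tset (z, sf g z)) l).
    split.
    + intros u Hu. apply in_map_iff in Hu as [z [<- Hz]]. simpl. rewrite Hg. reflexivity.
    + intros psi Hpsi. destruct (sym_surj psi) as [t Ht]. exists t. split; [|exact Ht].
      apply Hl. intros z Hz.
      assert (E := Hpsi _ (in_map (fun z => existT (fun X : dpiset (SymG T) => (X * X)%type) Tset (z, sf g z)) l z Hz)).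
      simpl in E. rewrite Ht in E. exact E.
Qed.
End SymNoohi.

Section GD.
Variable G : TopGroup.
Definition GD : TopGroup := {|
  tg_car := tg_car G; tg_mul := @tg_mul G; tg_inv := @tg_inv G; tg_one := @tg_one G;
  tg_mulA := tg_mulA G; tg_mul1g := tg_mul1g G; tg_mulg1 := tg_mulg1 G;
  tg_mulVg := tg_mulVg G; tg_mulgV := tg_mulgV G;
  tg_open := fun _ => True;
  tg_open_setT := I;
  tg_open_inter := fun _ _ _ _ => I;
  tg_open_union := fun _ _ => I;
  tg_mul_cont := fun W _ x y Hxy =>
     ex_intro _ (fun a => a = x) (ex_intro _ (fun b => b = y)
       (conj I (conj I (conj eq_refl (conj eq_refl
         (fun a b (Ha : a = x) (Hb : b = y) =>
            eq_ind_r (fun a => W (tg_mul a b)) (eq_ind_r (fun b => W (tg_mul x b)) Hxy Hb) Ha))))));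
  tg_inv_cont := fun _ _ => I |}.

Lemma Gset_actM (g h x : G) : tg_mul (tg_mul g h) x = tg_mul g (tg_mul h x).
Proof. symmetry; apply tg_mulA. Qed.

Definition Gset : dpiset GD := {| ps_car := tg_car G; ps_act := (@tg_mul G : GD -> G -> G);
  ps_act1 := tg_mul1g G; ps_actM := Gset_actM; ps_act_cont := fun _ _ => I |}.

Lemma GD_surj (phi : AutF GD) : exists g : GD,
  forall (X : dpiset GD) x, af_comp phi X x = ps_act X g x.
Proof.
  exists (af_comp phi Gset tg_one). intros X x.
  set (f := fun h : tg_car G => ps_act X (h : GD) x).
  assert (Hf : @equivariant _ Gset X f).
  { intros g h. unfold f. apply (ps_actM X). }
  pose proof (af_nat phi Hf tg_one) as E. unfold f in E at 2.
  transitivity (af_comp phi X (ps_act X (@tg_one GD) x)); [rewrite ps_act1; reflexivity | exact (eq_sym E)].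
Qed.

Lemma Noohi_GD : Noohi GD.
Proof.
  split; [|split; [|split]].
  - intros g h H. pose proof (H Gset tg_one) as E. simpl in E.
    rewrite !tg_mulg1 in E. exact E.
  - exact GD_surj.
  - intros; exact I.
  - intros U _ phi [g [Ug Hg]].
    exists [existT (fun X : dpiset GD => (X * X)%type) Gset (tg_one, g)]. split.
    + intros u [<-|[]]. simpl. rewrite Hg. simpl. apply tg_mulg1.
    + intros psi Hpsi. destruct (GD_surj psi) as [t Ht]. exists t. split; [|exact Ht].
      pose proof (Hpsi _ (or_introl eq_refl)) as E. simpl in E. rewrite Ht in E.
      simpl in E. rewrite tg_mulg1 in E. rewrite E. exact Ug.
Qed.
End GD.

Section Asym.
Variable P : TopGroup.
Variable X : dpiset P.

Lemma asym_fg (g : P) (x : X) : ps_act X g (ps_act X (tg_inv g) x) = x.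
Proof. rewrite <- ps_actM, tg_mulgV; apply ps_act1. Qed.
Lemma asym_gf (g : P) (x : X) : ps_act X (tg_inv g) (ps_act X g x) = x.
Proof. rewrite <- ps_actM, tg_mulVg; apply ps_act1. Qed.

Definition asym (g : P) : SymG (ps_car X) :=
  {| sf := ps_act X g; sg := ps_act X (tg_inv g); sfg := asym_fg g; sgf := asym_gf g |}.

Lemma open_agree (l : list X) (z0 : P) :
  tg_open (fun z => forall w, In w l -> ps_act X z w = ps_act X z0 w).
Proof.
  induction l as [|a l IH].
  - eapply open_ext; [|apply tg_open_setT]. simpl; tauto.
  - eapply open_ext; [|apply (tg_open_inter _ _ _ (ps_act_cont X a (ps_act X z0 a)) IH)].
    intros z; simpl; split.
    + intros [H1 H2] w [<-|Hw]; auto.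
    + intros H; split; auto.
Qed.

Lemma asym_cont_hom : cont_hom asym.
Proof.
  split.
  - intros g h. apply sym_eq. intro x. simpl. apply ps_actM.
  - intros V HV. apply locally_open. intros z0 Hz0.
    destruct (HV _ Hz0) as [l Hl].
    exists (fun z => forall w, In w l -> ps_act X z w = ps_act X z0 w).
    split; [apply open_agree | split; [auto|]].
    intros y Hy. apply Hl. exact Hy.
Qed.
End Asym.

Section Prod.
Variable P : TopGroup.
Lemma dunit_cont (x y : unit) : tg_open (fun g : P => x = y).
Proof. destruct x, y. eapply open_ext; [|apply tg_open_setT]. intros; split; auto. Qed.
Definition dunit : dpiset P := {| ps_car := unit; ps_act := fun _ u => u;
  ps_act1 := fun _ => eq_refl; ps_actM := fun _ _ _ => eq_refl; ps_act_cont := dunit_cont |}.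

Variables X Y : dpiset P.
Definition pact (g : P) (p : X * Y) : X * Y := (ps_act X g (fst p), ps_act Y g (snd p)).
Lemma pact1 p : pact tg_one p = p.
Proof. destruct p; unfold pact; simpl; rewrite !ps_act1; reflexivity. Qed.
Lemma pactM g h p : pact (tg_mul g h) p = pact g (pact h p).
Proof. destruct p; unfold pact; simpl; rewrite !ps_actM; reflexivity. Qed.
Lemma pact_cont p q : tg_open (fun g => pact g p = q).
Proof.
  destruct p as [a b], q as [c d].
  eapply open_ext; [|apply (tg_open_inter _ _ _ (ps_act_cont X a c) (ps_act_cont Y b d))].
  intros g; unfold pact; simpl; split.
  - intros [-> ->]; reflexivity.
  - intros H; injection H; auto.
Qed.
Definition dprod : dpiset P := {| ps_car := (X * Y)%type; ps_act := pact;
  ps_act1 := pact1; ps_actM := pactM; ps_act_cont := pact_cont |}.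
End Prod.

Fixpoint PS (P : TopGroup) (L : list (subbasic_pt P)) : dpiset P :=
  match L with nil => dunit P | u :: L' => dprod (projT1 u) (PS L') end.
Fixpoint pt (P : TopGroup) (L : list (subbasic_pt P)) : PS L :=
  match L return PS L with nil => tt | u :: L' => (fst (projT2 u), pt L') end.

Lemma PS_agree (P : TopGroup) (L : list (subbasic_pt P)) (z y : P) :
  ps_act (PS L) z (pt L) = ps_act (PS L) y (pt L) ->
  forall u, In u L -> ps_act (projT1 u) z (fst (projT2 u)) = ps_act (projT1 u) y (fst (projT2 u)).
Proof.
  induction L as [|v L IH]; simpl; [tauto|].
  intros H. unfold pact in H; simpl in H. injection H as H1 H2.
  intros u [<-|Hu]; auto.
Qed.

Section Dens.
Variables (Q pi' : TopGroup) (eta : Q -> pi').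
Hypothesis Hc : noohi_completion eta.

Lemma dens1 (X : dpiset pi') (x : X) (y : pi') :
  exists q, ps_act X (eta q) x = ps_act X y x.
Proof.
  apply NNPP; intro Hn.
  assert (Hn' : forall q, ps_act X (eta q) x <> ps_act X y x)
    by (intros q E; apply Hn; eauto).
  clear Hn.
  destruct Hc as [_ [[Heh Hec] Huniv]].
  assert (He1 : eta tg_one = tg_one) by (apply hom_one; exact Heh).
  set (B := fun w => exists q, w = ps_act X (eta q) x).
  set (s := fun t : (X * bool)%type =>
              if excluded_middle_informative (B (fst t)) then (fst t, negb (snd t)) else t).
  assert (sB : forall w i, B w -> s (w, i) = (w, negb i)).
  { intros w i Hw; unfold s; simpl; destruct excluded_middle_informative; tauto. }
  assert (snB : forall w i, ~ B w -> s (w, i) = (w, i)).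
  { intros w i Hw; unfold s; simpl; destruct excluded_middle_informative; tauto. }
  assert (ss : forall t, s (s t) = t).
  { intros [w i]. destruct (classic (B w)) as [Hw|Hw].
    - rewrite !sB by auto. rewrite Bool.negb_involutive; reflexivity.
    - rewrite !snB by auto; reflexivity. }
  set (D1 := dprod X (dunit pi')).
  clear D1.
  assert (bcont : forall (i j : bool), tg_open (fun _ : pi' => i = j)).
  { intros i j. destruct (Bool.bool_dec i j) as [->|Hij].
    - eapply open_ext; [|apply tg_open_setT]. intros; split; auto.
    - eapply open_ext; [|apply open_empty]. intros; split; [tauto|]. intros E; exact (Hij E). }
  set (Bset := {| ps_car := bool; ps_act := fun (_ : pi') (b : bool) => b;
     ps_act1 := fun _ => eq_refl; ps_actM := fun _ _ _ => eq_refl; ps_act_cont := bcont |}).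
  set (D1 := dprod X Bset).
  set (a2 := fun (g : pi') (t : D1) => s (ps_act D1 g (s t))).
  assert (a21 : forall t, a2 tg_one t = t).
  { intros t; unfold a2. rewrite ps_act1. apply ss. }
  assert (a2M : forall g h t, a2 (tg_mul g h) t = a2 g (a2 h t)).
  { intros g h t; unfold a2. rewrite ss, ps_actM. reflexivity. }
  assert (a2c : forall t t', tg_open (fun g => a2 g t = t')).
  { intros t t'. eapply open_ext; [|apply (ps_act_cont D1 (s t) (s t'))].
    intros g; unfold a2; split.
    - intros E; rewrite E; apply ss.
    - intros E; rewrite <- E, ss; reflexivity. }
  set (D2 := {| ps_car := ps_car D1; ps_act := a2; ps_act1 := a21; ps_actM := a2M;
                ps_act_cont := a2c |} : dpiset pi').
  assert (Hf : cont_hom (fun q => asym D1 (eta q))).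
  { destruct (asym_cont_hom D1) as [H1 H2]. split.
    - intros a b. rewrite Heh. apply H1.
    - intros V HV. apply (Hec _ (H2 V HV)). }
  destruct (Huniv (SymG (ps_car D1)) (fun q => asym D1 (eta q)) (Noohi_Sym _) Hf) as [_ Hu].
  assert (Hcomm : forall q t, s (ps_act D1 (eta q) t) = ps_act D1 (eta q) (s t)).
  { intros q [w i]. simpl. unfold pact; simpl.
    assert (HBiff : B (ps_act X (eta q) w) <-> B w).
    { split.
      - intros [q' Hq']. exists (tg_mul (tg_inv q) q').
        rewrite Heh, ps_actM, <- Hq', <- ps_actM, <- Heh, tg_mulVg, He1, ps_act1; try reflexivity.
      - intros [q' ->]. exists (tg_mul q q'). rewrite Heh, ps_actM; try reflexivity. }
    destruct (classic (B w)) as [Hw|Hw].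
    - rewrite (sB w i Hw), (sB _ i (proj2 HBiff Hw)). reflexivity.
    - assert (Hw' : ~ B (ps_act X (eta q) w)) by (rewrite HBiff; exact Hw).
      rewrite (snB w i Hw), (snB _ i Hw'). reflexivity. }
  assert (E := Hu (asym D1) (asym D2) (asym_cont_hom D1) (asym_cont_hom D2)
                  (fun q => eq_refl) ltac:(intro q; apply sym_eq; intro t; simpl;
                     unfold a2; rewrite Hcomm, ss; reflexivity) y).
  assert (E2 := f_equal (fun a => sf a (x, true)) E). simpl in E2.
  unfold a2 in E2. rewrite sB in E2.
  2:{ exists tg_one. rewrite He1, ps_act1; try reflexivity. }
  simpl in E2. unfold pact in E2; simpl in E2. rewrite snB in E2.
  - discriminate E2.
  - intros [q Hq]. apply (Hn' q). symmetry; exact Hq.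
Qed.
End Dens.

Lemma dens_open (Q pi' : TopGroup) (eta : Q -> pi') (Hc : noohi_completion eta)
  (W : pi' -> Prop) (y : pi') : tg_open W -> W y -> exists q, W (eta q).
Proof.
  intros HW Wy.
  destruct (proj1 Hc) as [Hinj [_ [_ Hopen]]].
  destruct (Hopen W HW (rho y) (ex_intro _ y (conj Wy (fun X x => eq_refl)))) as [L [Hsat HL]].
  destruct (dens1 Hc (PS L) (pt L) y) as [q Hq].
  pose proof (PS_agree L _ _ Hq) as HA.
  destruct (HL (rho (eta q))) as [g' [Wg' Hg']].
  - intros u Hu. simpl. rewrite (HA u Hu). exact (Hsat u Hu).
  - exists q. assert (eta q = g') as -> by (apply Hinj; intros X x; exact (Hg' X x)). exact Wg'.
Qed.

Theorem lemma2p29 (pi : TopGroup) (H : pi -> Prop) (Q pi' G : TopGroup)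
  (p : pi -> Q) (eta : Q -> pi') (lam' : pi' -> G) :
  Noohi pi -> subgroup H ->
  is_quotient (normal_closure H) p ->
  noohi_completion eta ->
  hausdorff G -> cont_hom lam' ->
  (discrete_hom (fun x => lam' (eta (p x))) <-> discrete_hom lam').
Proof.
  intros _ _ [Hp [_ [_ Hptop]]] Hc HG [Hlh Hlc].
  destruct (proj2 Hc) as [[Heh Hec] Huniv].
  split.
  - intros Hd.
    assert (HKQ : tg_open (fun q => lam' (eta q) = tg_one)) by (apply Hptop; exact Hd).
    set (h := fun q => lam' (eta q)).
    assert (Hhh : group_hom h) by (intros a b; unfold h; rewrite Heh, Hlh; reflexivity).
    assert (Hh : @cont_hom Q (GD G) h).
    { split; [exact Hhh|]. intros V _. apply locally_open. intros q0 Hq0.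
      exists (fun q => h (tg_mul (tg_inv q0) q) = tg_one). split; [|split].
      - apply (@open_translate Q (fun q => lam' (eta q) = tg_one)). exact HKQ.
      - rewrite tg_mulVg. apply hom_one. exact Hhh.
      - intros q Hq. simpl.
        assert (E : h q = h q0).
        { rewrite <- (tg_mul1g Q q) at 1. rewrite <- (tg_mulgV Q q0), <- tg_mulA, Hhh, Hq.
          apply tg_mulg1. }
        rewrite E. exact Hq0. }
    destruct (Huniv (GD G) h (Noohi_GD G) Hh) as [[g [[ghom gcont] Hgeta]] _].
    assert (Heq : forall y, lam' y = g y).
    { intro y. apply NNPP. intro Hne.
      destruct (HG _ _ Hne) as [U [V [HU [HV [Uy [Vy Hdisj]]]]]].
      destruct (@dens_open _ _ eta Hc (fun z => U (lam' z) /\ V (g z)) y) as [q [Uq Vq]].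
      - apply tg_open_inter; [apply Hlc; exact HU | apply (gcont V I)].
      - split; auto.
      - rewrite Hgeta in Vq. exact (Hdisj _ Uq Vq). }
    unfold discrete_hom. eapply open_ext; [|apply (gcont (fun w => w = tg_one) I)].
    intros z; simpl; rewrite Heq; tauto.
  - intros Hd. unfold discrete_hom.
    apply (proj1 (Hptop (fun q => lam' (eta q) = tg_one))). exact (Hec _ Hd).
Qed.
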